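(* Let $\mathbf{C}$ be a class of independence structures that contains a pregeometry independence structure $\mathcal{S}_{(M,\mathrm{cl})}$ for some pregeometry $(M,\mathrm{cl})$ satisfying (P1), (P2), (P3). Then for every set $\Sigma$ of independence atoms over $V$ and every independence atom $\phi$ over $V$, $$\Sigma\vdash_{\mathcal{I}}\phi\iff\Sigma\models_{\mathbf{C}}\phi.$$
   Context: Fix a countably infinite set $V$ of variables. An independence atom over $V$ is $\vec x\perp\vec y$ with $\vec x,\vec y$ finite (possibly empty) sequences of variables from $V$; concatenation is $\vec x\vec y$. $\Sigma\vdash_{\mathcal{I}}\phi$ means $\phi$ lies in the smallest set of independence atoms containing $\Sigma$ and closed under the rules: (a) $\vec x\perp\emptyset$; (b) from $\vec x\perp\vec y$ infer $\vec y\perp\vec x$; (c) from $\vec x\perp\vec y\vec z$ infer $\vec x\perp\vec y$; (d) from $\vec x\perp\vec y$ and $\vec x\vec y\perp\vec z$ infer $\vec x\perp\vec y\vec z$; (e) for a single variable $x$, from $x\perp x$ infer $x\perp\vec y$; (f) from $\vec x\perp\vec y$ infer $\vec u\perp\vec v$ for permutations $\vec u,\vec v$ of $\vec x,\vec y$; (g) from $\vec x y\vec z\perp\vec w$ infer $\vec x yy\vec z\perp\vec w$. An independence structure is a pair $(I,\perp)$, $I$ nonempty, $\perp$ a binary relation on finite subsets of $I$ such that (writing $\mathbf{x}\mathbf{y}=\mathbf{x}\cup\mathbf{y}$): (I1) $\mathbf{x}\perp\emptyset$; (I2) $\mathbf{x}\perp\mathbf{y}\Rightarrow\mathbf{y}\perp\mathbf{x}$;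 (I3) $\mathbf{x}\perp\mathbf{y}\mathbf{z}\Rightarrow\mathbf{x}\perp\mathbf{y}$; (I4) $\mathbf{x}\perp\mathbf{y}$ and $\mathbf{x}\mathbf{y}\perp\mathbf{z}$ imply $\mathbf{x}\perp\mathbf{y}\mathbf{z}$; (I5) $\mathbf{x}\perp\mathbf{x}\Rightarrow\mathbf{x}\perp\mathbf{y}$. Assignments are maps $s:V\to I$ with $s((x_0,\dots,x_{n-1}))=\{s(x_0),\dots,s(x_{n-1})\}$; $s$ satisfies $\vec x\perp\vec y$ iff $s(\vec x)\perp s(\vec y)$; $\Sigma\models_{\mathbf{C}}\phi$ means every assignment into every structure of $\mathbf{C}$ satisfying $\Sigma$ satisfies $\phi$. A pregeometry is a set $M$ with a closure operator $\mathrm{cl}$ (extensive, monotone, idempotent) satisfying Exchange (if $a\in\mathrm{cl}(A\cup\{b\})\setminus\mathrm{cl}(A)$ then $b\in\mathrm{cl}(A\cup\{a\})$) and Finite Character. Independence of a set and dimension $\dim(A)$ (cardinality of an independent $B\subseteq A$ with $A\subseteq\mathrm{cl}(B)$) are as usual; $\dim(A/C)$ is the dimension of $A$ in the pregeometry $(M,\mathrm{cl}_C)$, $\mathrm{cl}_C(X)=\mathrm{cl}(C\cup X)$. For $A,B,C\subseteq M$, $A$ is independent of $C$ over $B$ if $\dim(\vec a/B\cup C)=\dim(\vec a/B)$ for every finite tuple $\vec a$ from $A$. The pregeometry independence structure $\mathcal{S}_{(M,\mathrm{cl})}=(M,\perp)$ has $\mathbf{x}\perp\mathbf{y}$ iff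 $\mathbf{x}$ is independent of $\mathbf{y}$ over $\emptyset$. Properties: (P1) $\mathrm{cl}(\emptyset)\neq\emptyset$; (P2) for every finite independent $D_0\subseteq M$, $\mathrm{cl}(D_0)\neq\bigcup_{D\subsetneq D_0}\mathrm{cl}(D)$; (P3) $\dim(M)\ge\omega$. *)

(* Defs.v *)
(* Variables V = nat (a countably infinite set).
   Subsets of a type are predicates A -> Prop. *)
From Stdlib Require Import List Permutation.
Import ListNotations.
Set Implicit Arguments.

(* An atom  x ⊥ y  with x, y finite sequences of variables from V = nat. *)
Definition atom : Type := (list nat * list nat)%type.

Inductive derivable (Sigma : atom -> Prop) : atom -> Prop :=
| d_hyp : forall phi, Sigma phi -> derivable Sigma phi
| d_empty : forall x, derivable Sigma (x, [])
| d_sym : forall x y, derivable Sigma (x, y) -> derivable Sigma (y, x)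
| d_decomp : forall x y z,
    derivable Sigma (x, y ++ z) -> derivable Sigma (x, y)
| d_exch : forall x y z,
    derivable Sigma (x, y) -> derivable Sigma (x ++ y, z) ->
    derivable Sigma (x, y ++ z)
| d_const : forall (x : nat) y,
    derivable Sigma ([x], [x]) -> derivable Sigma ([x], y)
| d_perm : forall x y u v,
    derivable Sigma (x, y) -> Permutation x u -> Permutation y v ->
    derivable Sigma (u, v)
| d_dup : forall x (y : nat) z w,
    derivable Sigma (x ++ y :: z, w) -> derivable Sigma (x ++ y :: y :: z, w).

Definition finite_set {A : Type} (P : A -> Prop) : Prop :=
  exists l : list A, forall a, P a -> In a l.

Definition empty_set {A : Type} : A -> Prop := fun _ => False.
Definition union {A : Type} (P Q : A -> Prop) : A -> Prop := fun a => P a \/ Q a.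
Definition singleton {A : Type} (b : A) : A -> Prop := fun a => a = b.
Definition remove_pt {A : Type} (P : A -> Prop) (b : A) : A -> Prop :=
  fun a => P a /\ a <> b.
Definition subset {A : Type} (P Q : A -> Prop) : Prop := forall a, P a -> Q a.
Definition proper_subset {A : Type} (P Q : A -> Prop) : Prop :=
  subset P Q /\ exists a, Q a /\ ~ P a.
Definition set_of_list {A : Type} (l : list A) : A -> Prop := fun a => In a l.

(* A pair (I, ⊥); ⊥ is a binary relation on subsets of I (only its values on
   finite subsets matter, the axioms below only concern finite subsets). *)
Record IStruct : Type := mkIStruct {
  carrier : Type;
  perp : (carrier -> Prop) -> (carrier -> Prop) -> Prop
}.

Definition is_indep_structure (S : IStruct) : Prop :=
  inhabited (carrier S) /\
  (forall x, finite_set x -> perp S x empty_set) /\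
  (forall x y, finite_set x -> finite_set y -> perp S x y -> perp S y x) /\
  (forall x y z, finite_set x -> finite_set y -> finite_set z ->
     perp S x (union y z) -> perp S x y) /\
  (forall x y z, finite_set x -> finite_set y -> finite_set z ->
     perp S x y -> perp S (union x y) z -> perp S x (union y z)) /\
  (forall x y, finite_set x -> finite_set y -> perp S x x -> perp S x y).

Definition assign_img {I : Type} (s : nat -> I) (xs : list nat) : I -> Prop :=
  fun i => exists v, In v xs /\ s v = i.

Definition satisfies (S : IStruct) (s : nat -> carrier S) (phi : atom) : Prop :=
  perp S (assign_img s (fst phi)) (assign_img s (snd phi)).

Definition models (C : IStruct -> Prop) (Sigma : atom -> Prop) (phi : atom) : Prop :=
  forall S : IStruct, C S -> forall s : nat -> carrier S,
    (forall psi, Sigma psi -> satisfies S s psi) -> satisfies S s phi.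

Definition is_pregeometry {M : Type} (cl : (M -> Prop) -> (M -> Prop)) : Prop :=
  (forall A, subset A (cl A)) /\
  (forall A B, subset A B -> subset (cl A) (cl B)) /\
  (forall A a, cl (cl A) a <-> cl A a) /\
  (forall A a b, cl (union A (singleton b)) a -> ~ cl A a ->
     cl (union A (singleton a)) b) /\
  (forall A a, cl A a -> exists A0, finite_set A0 /\ subset A0 A /\ cl A0 a).

Definition cl_over {M : Type} (cl : (M -> Prop) -> (M -> Prop)) (C : M -> Prop)
  : (M -> Prop) -> (M -> Prop) := fun X => cl (union C X).

Definition independent {M : Type} (cl : (M -> Prop) -> (M -> Prop)) (B : M -> Prop)
  : Prop := forall a, B a -> ~ cl (remove_pt B a) a.

Definition dim_is {M : Type} (cl : (M -> Prop) -> (M -> Prop)) (A : M -> Prop)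
  (n : nat) : Prop :=
  exists b : list M, NoDup b /\ length b = n /\ subset (set_of_list b) A /\
    independent cl (set_of_list b) /\ subset A (cl (set_of_list b)).

Definition dim_over_is {M : Type} (cl : (M -> Prop) -> (M -> Prop)) (a : list M)
  (C : M -> Prop) (n : nat) : Prop :=
  dim_is (cl_over cl C) (set_of_list a) n.

Definition indep_over {M : Type} (cl : (M -> Prop) -> (M -> Prop))
  (A B C : M -> Prop) : Prop :=
  forall a : list M, subset (set_of_list a) A ->
    forall n, dim_over_is cl a (union B C) n <-> dim_over_is cl a B n.

Definition pregeom_struct (M : Type) (cl : (M -> Prop) -> (M -> Prop)) : IStruct :=
  @mkIStruct M (fun x y => indep_over cl x empty_set y).

Definition P1 {M : Type} (cl : (M -> Prop) -> (M -> Prop)) : Prop :=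
  exists m, cl empty_set m.

Definition P2 {M : Type} (cl : (M -> Prop) -> (M -> Prop)) : Prop :=
  forall D0 : M -> Prop, finite_set D0 -> independent cl D0 ->
    ~ (forall m, cl D0 m <-> exists D, proper_subset D D0 /\ cl D m).

(* (P3) dim(M) ≥ ω : M has an infinite basis (independent spanning set). *)
Definition P3 {M : Type} (cl : (M -> Prop) -> (M -> Prop)) : Prop :=
  exists B : M -> Prop, independent cl B /\ (forall m, cl B m) /\ ~ finite_set B.

(* Main.v *)
Require Import Defs.
From Stdlib Require Import List Permutation.
From Stdlib Require Import Classical Arith Lia FunctionalExtensionality PropExtensionality.
Import ListNotations.


Section Syn.
Variable Sigma : atom -> Prop.
Notation D := (derivable Sigma).

Lemma dsym (x y : list nat) : D (x,y) -> D (y,x).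
Proof. apply d_sym. Qed.

Lemma dperm (x y u v : list nat) : D (x,y) -> Permutation x u -> Permutation y v -> D (u,v).
Proof. intros; eapply d_perm; eauto. Qed.

Lemma ddecl (x z w : list nat) : D (x ++ z, w) -> D (x, w).
Proof. intro H. apply dsym. apply d_decomp with (z:=z). now apply dsym. Qed.

Lemma nodup_perm (a u : list nat) : NoDup a -> incl a u -> exists r, Permutation u (a ++ r).
Proof.
  revert u; induction a as [|x t IH]; intros u Hn Hi.
  - exists u. simpl. apply Permutation_refl.
  - inversion Hn; subst.
    destruct (in_split x u) as [l1 [l2 E]]. { apply Hi; left; auto. }
    subst u.
    destruct (IH (l1 ++ l2)) as [r Hr]; auto.
    { intros z Hz. assert (In z (l1 ++ x :: l2)) by (apply Hi; right; auto).
      apply in_app_or in H. apply in_or_app. destruct H as [H|[H|H]]; auto.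
      subst; contradiction. }
    exists r. simpl. eapply Permutation_trans. apply Permutation_sym, Permutation_middle.
    apply perm_skip. auto.
Qed.

Lemma dup_add (a l w : list nat) : D (a, w) -> incl l a -> D (a ++ l, w).
Proof.
  intros H; induction l as [|v l IH]; intros Hi.
  - rewrite app_nil_r; auto.
  - assert (D (a ++ l, w)) as H1 by (apply IH; intros z Hz; apply Hi; right; auto).
    assert (In v (a ++ l)) as Hv by (apply in_or_app; left; apply Hi; left; auto).
    destruct (in_split v _ Hv) as [l1 [l2 E]].
    assert (D ([] ++ v :: (l1 ++ l2), w)) as H2.
    { eapply dperm. exact H1. rewrite E. apply Permutation_sym, Permutation_middle. apply Permutation_refl. }
    apply d_dup in H2. simpl in H2.
    eapply dperm. exact H2. 2: apply Permutation_refl.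
    eapply Permutation_trans. 2: apply Permutation_middle.
    apply perm_skip. rewrite E. apply Permutation_middle.
Qed.

Lemma proj_l (u w u' : list nat) : D (u, w) -> incl u' u -> D (u', w).
Proof.
  intros H Hi.
  set (a := nodup Nat.eq_dec u').
  assert (NoDup a) by apply NoDup_nodup.
  assert (incl a u) by (intros z Hz; apply Hi; apply (nodup_In Nat.eq_dec); auto).
  destruct (nodup_perm a u) as [r Hr]; auto.
  assert (D (a, w)). { apply ddecl with (z:=r). eapply dperm; eauto. }
  assert (D (a ++ u', w)). { apply dup_add; auto. intros z Hz; apply (nodup_In Nat.eq_dec); auto. }
  apply ddecl with (z:=a). eapply dperm; eauto. apply Permutation_app_comm.
Qed.

Lemma proj (u w u' w' : list nat) : D (u, w) -> incl u' u -> incl w' w -> D (u', w').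
Proof.
  intros H H1 H2. apply proj_l with u; auto. apply dsym. apply proj_l with w; auto. apply dsym; auto.
Qed.

Lemma add_const (a b : list nat) (v : nat) : D (a,b) -> D ([v],[v]) -> D (a, b ++ [v]).
Proof.
  intros H Hv. apply d_exch; auto. apply dsym. apply d_const; auto.
Qed.

Lemma comb (A B C0 D0 : list nat) : D (A ++ C0, B ++ D0) -> D (A, C0) -> D (B, D0) -> D (A ++ B, C0 ++ D0).
Proof.
  intros H HAC HBD.
  assert (H1 : D (A, C0 ++ B ++ D0)) by (apply d_exch; auto).
  assert (H2 : D (B, D0 ++ A ++ C0)) by (apply d_exch; auto; apply dsym; auto).
  assert (H3 : D (C0 ++ D0, B)).
  { apply dsym. apply d_decomp with (z := A).
    eapply dperm. exact H2. apply Permutation_refl.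
    eapply Permutation_trans. apply Permutation_app_head. apply Permutation_app_comm.
    rewrite app_assoc. apply Permutation_app_tail. apply Permutation_app_comm. }
  assert (H4 : D ((C0 ++ D0) ++ B, A)).
  { apply dsym. eapply dperm. exact H1. apply Permutation_refl.
    rewrite <- app_assoc. apply Permutation_app_head.
    apply Permutation_app_comm. }
  assert (H5 : D (C0 ++ D0, B ++ A)) by (apply d_exch; auto).
  apply dsym. eapply dperm. exact H5. apply Permutation_refl. apply Permutation_app_comm.
Qed.

Definition minimal (X Y : list nat) :=
  NoDup X /\ NoDup Y /\ ~ D (X, Y) /\
  forall X' Y', NoDup X' -> NoDup Y' -> incl X' X -> incl Y' Y ->
    length X' + length Y' < length X + length Y -> D (X', Y').

Lemma min_exists k : forall X Y, NoDup X -> NoDup Y -> length X + length Y <= k -> ~ D (X, Y) ->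
  exists X0 Y0, incl X0 X /\ incl Y0 Y /\ minimal X0 Y0.
Proof.
  induction k; intros X Y HX HY Hl HD.
  - exists X, Y. split; [apply incl_refl|split; [apply incl_refl|]].
    repeat split; auto. intros; lia.
  - destruct (classic (forall X' Y', NoDup X' -> NoDup Y' -> incl X' X -> incl Y' Y ->
      length X' + length Y' < length X + length Y -> D (X', Y'))) as [Hm|Hm].
    + exists X, Y. split; [apply incl_refl|split; [apply incl_refl|]]. repeat split; auto.
    + apply not_all_ex_not in Hm as [X' Hm]. apply not_all_ex_not in Hm as [Y' Hm].
      repeat (apply imply_to_and in Hm as [? Hm]).
      destruct (IHk X' Y') as [X0 [Y0 [? [? ?]]]]; auto. lia.
      exists X0, Y0. split; [|split]; auto; eapply incl_tran; eauto.
Qed.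

Lemma min_nonconst (X Y : list nat) : minimal X Y -> forall v, In v X \/ In v Y -> ~ D ([v],[v]).
Proof.
  intros [HX [HY [HD Hm]]] v Hv Hc. apply HD.
  set (f := fun z => negb (Nat.eqb z v)).
  assert (Hf : forall l, incl l (filter f l ++ [v])).
  { intros l z Hz. destruct (Nat.eq_dec z v). subst; apply in_or_app; right; left; auto.
    apply in_or_app; left; apply filter_In; split; auto. unfold f. apply Nat.eqb_neq in n. rewrite n; auto. }
  assert (Hlen : forall l, In v l -> length (filter f l) < length l).
  { intros l Hl. pose proof (filter_length f l).
    assert (In v (filter (fun x => negb (f x)) l)). { apply filter_In. split; auto. unfold f. rewrite Nat.eqb_refl. auto. }
    destruct (filter (fun x => negb (f x)) l); [contradiction|]. simpl in H. lia. }
  assert (Hinc : forall l, incl (filter f l) l) by (intros l z Hz; apply filter_In in Hz; tauto).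
  destruct Hv as [Hv|Hv].
  - assert (D (filter f X, Y)). { apply Hm; auto. apply NoDup_filter; auto. apply incl_refl. specialize (Hlen X Hv); lia. }
    apply dsym in H. apply (add_const _ _ v) in H; auto. apply dsym in H.
    eapply proj; eauto. apply incl_refl.
  - assert (D (X, filter f Y)). { apply Hm; auto. apply NoDup_filter; auto. apply incl_refl. specialize (Hlen Y Hv); lia. }
    apply (add_const _ _ v) in H; auto. eapply proj; eauto. apply incl_refl.
Qed.

Lemma min_cover (X Y u w : list nat) : minimal X Y -> D (u, w) ->
  (forall v, (In v X \/ In v Y) -> In v u -> In v w -> False) ->
  (forall v, (In v X \/ In v Y) -> In v u \/ In v w) ->
  (exists v, (In v X \/ In v Y) /\ In v u) ->
  (exists v, (In v X \/ In v Y) /\ In v w) -> False.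
Proof.
  intros Hmin Huw Ha Hc [v1 [Z1 U1]] [v2 [Z2 W2]].
  pose proof Hmin as [HX [HY [HD Hm]]].
  set (f := fun z => if in_dec Nat.eq_dec z u then true else false).
  set (A := filter f X). set (B := filter (fun x => negb (f x)) X).
  set (C0 := filter f Y). set (D0 := filter (fun x => negb (f x)) Y).
  assert (Ain : forall z, In z A <-> In z X /\ In z u).
  { intro z; unfold A; rewrite filter_In; unfold f; destruct (in_dec Nat.eq_dec z u); intuition congruence. }
  assert (Bin : forall z, In z B <-> In z X /\ ~ In z u).
  { intro z; unfold B; rewrite filter_In; unfold f; destruct (in_dec Nat.eq_dec z u); simpl; intuition congruence. }
  assert (Cin : forall z, In z C0 <-> In z Y /\ In z u).
  { intro z; unfold C0; rewrite filter_In; unfold f; destruct (in_dec Nat.eq_dec z u); intuition congruence. }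
  assert (Din : forall z, In z D0 <-> In z Y /\ ~ In z u).
  { intro z; unfold D0; rewrite filter_In; unfold f; destruct (in_dec Nat.eq_dec z u); simpl; intuition congruence. }
  pose proof (filter_length f X). pose proof (filter_length f Y).
  fold A B in H. fold C0 D0 in H0.
  assert (Hw : forall z, In z B \/ In z D0 -> In z w).
  { intros z [Hz|Hz]; [apply Bin in Hz|apply Din in Hz]; destruct (Hc z); tauto. }
  assert (HBD : length B + length D0 > 0).
  { destruct (in_dec Nat.eq_dec v2 u) as [i|i]. exfalso; eapply Ha; eauto.
    destruct Z2 as [Z2|Z2].
    - assert (In v2 B) by (apply Bin; auto). destruct B; [contradiction|simpl; lia].
    - assert (In v2 D0) by (apply Din; auto). destruct D0; [contradiction|simpl; lia]. }
  assert (HAC : length A + length C0 > 0).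
  { destruct Z1 as [Z1|Z1].
    - assert (In v1 A) by (apply Ain; auto). destruct A; [contradiction|simpl; lia].
    - assert (In v1 C0) by (apply Cin; auto). destruct C0; [contradiction|simpl; lia]. }
  apply HD.
  assert (D (A ++ B, C0 ++ D0)).
  { apply comb.
    - eapply proj; eauto.
      + intros z Hz; apply in_app_or in Hz; destruct Hz as [Hz|Hz]; [apply Ain in Hz|apply Cin in Hz]; tauto.
      + intros z Hz; apply in_app_or in Hz; apply Hw; auto.
    - apply Hm. apply NoDup_filter; auto. apply NoDup_filter; auto.
      intros z Hz; apply Ain in Hz; tauto. intros z Hz; apply Cin in Hz; tauto. lia.
    - apply Hm. apply NoDup_filter; auto. apply NoDup_filter; auto.
      intros z Hz; apply Bin in Hz; tauto. intros z Hz; apply Din in Hz; tauto. lia. }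
  eapply proj; eauto.
  - intros z Hz. apply in_or_app. destruct (in_dec Nat.eq_dec z u); [left; apply Ain|right; apply Bin]; auto.
  - intros z Hz. apply in_or_app. destruct (in_dec Nat.eq_dec z u); [left; apply Cin|right; apply Din]; auto.
Qed.

End Syn.

Lemma pred_ext {A : Type} (P Q : A -> Prop) : (forall a, P a <-> Q a) -> P = Q.
Proof. intro H. apply functional_extensionality. intro a. apply propositional_extensionality. auto. Qed.

Section Sound.
Variable S : IStruct.
Variable s : nat -> carrier S.
Notation img := (assign_img s).

Lemma img_nil : img [] = empty_set.
Proof. apply pred_ext. intro a; unfold assign_img, empty_set; simpl; firstorder. Qed.

Lemma img_app x y : img (x ++ y) = union (img x) (img y).
Proof. apply pred_ext. intro a; unfold assign_img, union; split.
  - intros [v [Hv E]]. apply in_app_or in Hv. firstorder.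
  - intros [[v [Hv E]]|[v [Hv E]]]; exists v; split; auto; apply in_or_app; auto. Qed.

Lemma img_perm x u : Permutation x u -> img x = img u.
Proof. intro P. apply pred_ext. intro a; unfold assign_img; split; intros [v [Hv E]]; exists v; split; auto.
  eapply Permutation_in; eauto. eapply Permutation_in; [apply Permutation_sym|]; eauto. Qed.

Lemma img_dup x y z : img (x ++ y :: y :: z) = img (x ++ y :: z).
Proof. apply pred_ext. intro a; unfold assign_img; split; intros [v [Hv E]]; exists v; split; auto.
  - apply in_app_or in Hv; apply in_or_app; simpl in *; tauto.
  - apply in_app_or in Hv; apply in_or_app; simpl in *; tauto. Qed.

Lemma img_fin x : finite_set (img x).
Proof. exists (map s x). intros a [v [Hv E]]. subst. apply in_map; auto. Qed.

Lemma soundness (Sigma : atom -> Prop) : is_indep_structure S ->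
  (forall psi, Sigma psi -> satisfies S s psi) ->
  forall phi, derivable Sigma phi -> satisfies S s phi.
Proof.
  intros [_ [I1 [I2 [I3 [I4 I5]]]]] HS phi Hd.
  unfold satisfies in *.
  induction Hd; simpl in *; auto.
  - rewrite img_nil. apply I1, img_fin.
  - apply I2; auto; apply img_fin.
  - rewrite img_app in IHHd. eapply I3; eauto; apply img_fin.
  - rewrite img_app. rewrite img_app in IHHd2. apply I4; auto; apply img_fin.
  - apply I5; auto; apply img_fin.
  - rewrite <- (img_perm _ _ H), <- (img_perm _ _ H0). auto.
  - rewrite img_dup. auto.
Qed.
End Sound.

Section Lk.
Variable M : Type.
Fixpoint lk (ks : list nat) (es : list M) (d : M) (v : nat) : M :=
  match ks, es with
  | k :: ks', e :: es' => if Nat.eqb k v then e else lk ks' es' d v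
  | _, _ => d
  end.

Lemma lk_notin ks es d v : ~ In v ks -> lk ks es d v = d.
Proof.
  revert es; induction ks as [|k ks IH]; intros [|e es] H; simpl; auto.
  destruct (Nat.eqb_spec k v). subst; exfalso; apply H; left; auto.
  apply IH. intro; apply H; right; auto.
Qed.

Lemma lk_in ks es d v : length ks = length es -> In v ks -> In (lk ks es d v) es.
Proof.
  revert es; induction ks as [|k ks IH]; intros [|e es] Hl H; simpl in *; try lia; try contradiction.
  destruct (Nat.eqb_spec k v). left; auto. right. apply IH; [lia|]. destruct H; auto; contradiction.
Qed.

Lemma lk_inj ks es d v1 v2 : length ks = length es -> NoDup es -> In v1 ks -> In v2 ks ->
  lk ks es d v1 = lk ks es d v2 -> v1 = v2.
Proof.
  revert es; induction ks as [|k ks IH]; intros [|e es] Hl Hn H1 H2 E; simpl in *; try lia; try contradiction.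
  apply NoDup_cons_iff in Hn as [Hn1 Hn2].
  destruct (Nat.eqb_spec k v1) as [K1|K1], (Nat.eqb_spec k v2) as [K2|K2]; try congruence.
  - exfalso. apply Hn1. rewrite E. apply lk_in; [lia|]. destruct H2; auto; contradiction.
  - exfalso. apply Hn1. rewrite <- E. apply lk_in; [lia|]. destruct H1; auto; contradiction.
  - apply (IH es); auto. destruct H1; auto; contradiction. destruct H2; auto; contradiction.
Qed.

Lemma lk_surj ks es d e : length ks = length es -> NoDup ks -> In e es -> exists v, In v ks /\ lk ks es d v = e.
Proof.
  revert es; induction ks as [|k ks IH]; intros [|e' es] Hl Hn H; simpl in *; try lia; try contradiction.
  apply NoDup_cons_iff in Hn as [Hn1 Hn2].
  destruct H as [H|H].
  - subst. exists k. rewrite Nat.eqb_refl. auto.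
  - destruct (IH es) as [v [Hv E]]; auto. exists v. split; auto.
    destruct (Nat.eqb_spec k v); subst; auto. contradiction.
Qed.

Lemma lk_app1 ks1 ks2 es1 es2 d v : length ks1 = length es1 -> In v ks1 ->
  lk (ks1 ++ ks2) (es1 ++ es2) d v = lk ks1 es1 d v.
Proof.
  revert es1; induction ks1 as [|k ks IH]; intros [|e es] Hl H; simpl in *; try lia; try contradiction.
  destruct (Nat.eqb_spec k v); auto. apply IH; [lia|]. destruct H; auto. contradiction.
Qed.

Lemma lk_app2 ks1 ks2 es1 es2 d v : length ks1 = length es1 -> ~ In v ks1 ->
  lk (ks1 ++ ks2) (es1 ++ es2) d v = lk ks2 es2 d v.
Proof.
  revert es1; induction ks1 as [|k ks IH]; intros [|e es] Hl H; simpl in *; try lia; auto.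
  destruct (Nat.eqb_spec k v). exfalso; auto. apply IH; [lia|]. auto.
Qed.
End Lk.

Section Sem.
Variable M : Type.
Variable cl : (M -> Prop) -> (M -> Prop).
Hypothesis ext : forall A, subset A (cl A).
Hypothesis mono : forall A B, subset A B -> subset (cl A) (cl B).
Hypothesis idem : forall A a, cl (cl A) a <-> cl A a.
Hypothesis exch : forall A a b, cl (union A (singleton b)) a -> ~ cl A a ->
     cl (union A (singleton a)) b.

Lemma cl_sub A B : subset A (cl B) -> subset (cl A) (cl B).
Proof. intros H x Hx. apply idem. eapply mono; eauto. Qed.

Lemma cl0 A x : cl empty_set x -> cl A x.
Proof. intro H. eapply mono; [|exact H]. intros y []. Qed.

Lemma not_in_cl D e Y : independent cl D -> D e ->
  subset Y (fun d => (D d /\ d <> e) \/ cl empty_set d) -> ~ cl Y e.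
Proof.
  intros HD He HY Hc. apply (HD e He).
  revert Hc. apply cl_sub. intros d Hd. destruct (HY d Hd) as [[H1 H2]|H1].
  - apply ext. split; auto.
  - apply cl0; auto.
Qed.

Lemma dim_transfer (cl1 cl2 : (M -> Prop) -> (M -> Prop)) (a : list M) n :
  (forall b : list M, subset (set_of_list b) (set_of_list a) ->
     (independent cl1 (set_of_list b) <-> independent cl2 (set_of_list b)) /\
     (subset (set_of_list a) (cl1 (set_of_list b)) <-> subset (set_of_list a) (cl2 (set_of_list b)))) ->
  (dim_is cl1 (set_of_list a) n <-> dim_is cl2 (set_of_list a) n).
Proof.
  intro H. split; intros [b [H1 [H2 [H3 [H4 H5]]]]]; exists b; destruct (H b H3) as [E1 E2];
  repeat split; auto; try apply E1; try apply E2; auto.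
Qed.

Lemma sat_gen (U W : M -> Prop) :
  subset W (cl empty_set) \/ subset U (cl empty_set) \/
  (exists D, independent cl D /\ subset U (fun d => D d \/ cl empty_set d) /\
      subset W (fun d => D d \/ cl empty_set d) /\ (forall d, D d -> U d -> W d -> False)) ->
  indep_over cl U empty_set W.
Proof.
  intros Hc a Ha n. unfold dim_over_is. apply dim_transfer. intros b Hb.
  unfold independent, cl_over.
  destruct Hc as [HW|[HU|[D [HD [HUD [HWD Hdis]]]]]].
  - assert (E : forall X x, cl (union (union empty_set W) X) x <-> cl (union empty_set X) x).
    { intros X x; split.
      - apply cl_sub. intros y [[[]|Hy]|Hy]. apply cl0; auto. apply ext; right; auto.
      - apply mono. intros y [[]|Hy]. right; auto. }
    split; split.
    + intros H e He Hc'. apply (H e He). apply E; auto.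
    + intros H e He Hc'. apply (H e He). apply E; auto.
    + intros H t Ht. apply E; auto.
    + intros H t Ht. apply E; auto.
  - split; split.
    + intros H e He Hc'. apply (H e He). eapply mono; [|exact Hc']. intros y [[]|Hy]. right; auto.
    + intros H e He Hc'. apply (H e He). apply cl0. apply HU, Ha, Hb, He.
    + intros H t Ht. apply cl0. apply HU, Ha, Ht.
    + intros H t Ht. apply cl0. apply HU, Ha, Ht.
  - split.
    + destruct (classic (exists e, set_of_list b e /\ cl empty_set e)) as [[e [He H0]]|Hn].
      * split; intros H; exfalso; apply (H e He); apply cl0; auto.
      * assert (HbD : forall e, set_of_list b e -> D e /\ U e).
        { intros e He. assert (U e) by (apply Ha, Hb, He). destruct (HUD e H) as [H1|H1]; auto.
          exfalso; apply Hn; eauto. }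
        assert (Hall : forall C, subset C W -> forall e, set_of_list b e ->
                  ~ cl (union C (remove_pt (set_of_list b) e)) e).
        { intros C HC e He. destruct (HbD e He) as [De Ue]. apply (not_in_cl D); auto.
          intros d [Hd|[Hd1 Hd2]].
          - apply HC in Hd. destruct (HWD d Hd) as [H1|H1]; auto. left; split; auto.
            intro; subst; eauto.
          - left. split; auto. apply HbD; auto. }
        split; intros _ e He.
        -- apply (Hall empty_set); auto. intros _ [].
        -- apply (Hall (union empty_set W)); auto. intros y [[]|Hy]; auto.
    + split.
      * intros H t Ht. specialize (H t Ht).
        destruct (classic (cl empty_set t)) as [H0|H0]. apply cl0; auto.
        destruct (classic (set_of_list b t)) as [H1|H1]. apply ext; right; auto.
        exfalso. assert (Ut : U t) by (apply Ha, Ht). assert (Dt : D t) by (destruct (HUD t Ut); tauto).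
        revert H. apply (not_in_cl D); auto.
        intros d [[[]|Hd]|Hd].
        -- destruct (HWD d Hd) as [H2|H2]; auto. left; split; auto. intro; subst; eauto.
        -- assert (U d) by (apply Ha, Hb, Hd). destruct (HUD d H) as [H2|H2]; auto.
           left; split; auto. intro; subst; auto.
      * intros H t Ht. eapply mono; [|apply H; auto]. intros y [[]|Hy]. right; auto.
Qed.


Lemma indep_not0 B e : independent cl B -> B e -> ~ cl empty_set e.
Proof. intros H He Hc. apply (H e He). apply cl0; auto. Qed.

Lemma sub_indep A B : independent cl B -> subset A B -> independent cl A.
Proof. intros H HAB e He Hc. apply (H e (HAB e He)). revert Hc. apply mono.
  intros y [Hy Hy']. split; auto. Qed.

Lemma refute_shared (U W : M -> Prop) e : U e -> W e -> ~ cl empty_set e ->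
  ~ indep_over cl U empty_set W.
Proof.
  intros HU HW He H. specialize (H [e]). 
  assert (Hs : subset (set_of_list [e]) U) by (intros y [Hy|[]]; subst; auto).
  specialize (H Hs 0). destruct H as [H _].
  destruct H as [b [H1 [H2 [H3 [H4 H5]]]]].
  - exists []. repeat split; auto. constructor. intros y []. intros y []. 
    intros y [Hy|[]]. subst. apply ext. left. right. auto.
  - destruct b; [|simpl in H2; discriminate]. apply He.
    assert (cl_over cl empty_set (set_of_list []) e) by (apply H5; left; auto).
    revert H. apply mono. intros y [[]|[]].
Qed.

Lemma refute_circ (dl d1 d2 : list M) c (U W : M -> Prop) : NoDup dl -> dl = d1 ++ d2 -> d1 <> [] ->
  independent cl (set_of_list dl) -> cl (set_of_list dl) c ->
  (forall D, proper_subset D (set_of_list dl) -> ~ cl D c) ->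
  subset (set_of_list d1) U -> subset (set_of_list d2) W -> W c ->
  ~ indep_over cl U empty_set W.
Proof.
  intros Hn Edl Hd1 Hi Hc Hp HU HW Wc H.
  assert (Hn1 : NoDup d1) by (subst; eapply NoDup_app_remove_r; eauto).
  specialize (H d1 HU (length d1)). destruct H as [_ H].
  destruct H as [b [H1 [H2 [H3 [H4 H5]]]]].
  - exists d1. repeat split; auto. intros y Hy; auto.
    + intros e He Hce. apply (Hi e). subst; apply in_or_app; auto.
      revert Hce. apply mono. intros y [[]|[Hy Hy']]. split; auto. subst; apply in_or_app; auto.
    + intros y Hy. apply ext. right. auto.
  - assert (Hinc : incl d1 b) by (apply NoDup_length_incl; auto; lia).
    destruct d1 as [|e d1']; [congruence|].
    assert (eb : In e b) by (apply Hinc; left; auto).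
    apply (H4 e eb).
    set (A := remove_pt (set_of_list dl) e).
    assert (edl : In e dl) by (subst; left; auto).
    assert (Hc1 : cl (union A (singleton e)) c).
    { revert Hc. apply mono. intros y Hy. destruct (classic (y = e)). right; auto. left; split; auto. }
    assert (Hc2 : ~ cl A c).
    { apply Hp. split. intros y [Hy _]; auto. exists e; split; auto. intros [_ Hne]; auto. }
    pose proof (exch A c e Hc1 Hc2) as Hx.
    revert Hx. apply mono. intros y [[Hy1 Hy2]|Hy].
    + rewrite Edl in Hy1. apply in_app_or in Hy1. destruct Hy1 as [Hy1|Hy1].
      * right. split; auto. apply Hinc; auto.
      * left. right. apply HW. auto.
    + unfold singleton in Hy; subst. left; right; auto.
Qed.

Lemma circ_indep (dl : list M) c e0 : NoDup dl -> independent cl (set_of_list dl) ->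
  (forall D, proper_subset D (set_of_list dl) -> ~ cl D c) -> ~ In c dl ->
  In e0 (dl ++ [c]) -> independent cl (fun d => In d (dl ++ [c]) /\ d <> e0).
Proof.
  intros Hn Hi Hp Hcn He0.
  destruct (classic (e0 = c)) as [Ec|Ec].
  - subst e0. apply (sub_indep _ _ Hi). intros d [Hd Hne]. apply in_app_or in Hd.
    destruct Hd as [Hd|[Hd|[]]]; auto. congruence.
  - assert (e0dl : In e0 dl). { apply in_app_or in He0. destruct He0 as [H|[H|[]]]; auto. congruence. }
    intros a [Ha Hae] Hcl.
    destruct (classic (a = c)) as [Ac|Ac].
    + subst a. apply (Hp (remove_pt (set_of_list (dl)) e0)).
      * split. intros y [Hy _]; auto. exists e0. split; auto. intros [_ H]; auto.
      * revert Hcl. apply mono. intros y [[Hy1 Hy2] Hy3]. apply in_app_or in Hy1.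
        destruct Hy1 as [Hy1|[Hy1|[]]]. split; auto. congruence.
    + assert (adl : In a dl). { apply in_app_or in Ha. destruct Ha as [H|[H|[]]]; auto. congruence. }
      set (A := fun d => In d dl /\ d <> e0 /\ d <> a).
      assert (H1 : cl (union A (singleton c)) a).
      { revert Hcl. apply mono. intros y [[Hy1 Hy2] Hy3]. apply in_app_or in Hy1.
        destruct Hy1 as [Hy1|[Hy1|[]]]. left. split; auto. right. unfold singleton; auto. }
      assert (H2 : ~ cl A a).
      { intro H. apply (Hi a adl). revert H. apply mono. intros y [Hy1 [Hy2 Hy3]]. split; auto. }
      pose proof (exch A a c H1 H2) as H3.
      apply (Hp (remove_pt (set_of_list dl) e0)).
      * split. intros y [Hy _]; auto. exists e0. split; auto. intros [_ H]; auto.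
      * revert H3. apply mono. intros y [[Hy1 [Hy2 Hy3]]|Hy]. split; auto.
        unfold singleton in Hy; subst. split; auto.
Qed.

Lemma P3_lists (B : M -> Prop) : independent cl B -> ~ finite_set B ->
  forall n, exists dl, NoDup dl /\ length dl = n /\ subset (set_of_list dl) B.
Proof.
  intros Hi Hf n. induction n as [|n [dl [H1 [H2 H3]]]].
  - exists []. repeat split; auto. constructor. intros y [].
  - assert (exists a, B a /\ ~ In a dl) as [a [Ba Na]].
    { apply NNPP. intro Hn. apply Hf. exists dl. intros a Ba. apply NNPP. intro. apply Hn; eauto. }
    exists (a :: dl). repeat split; simpl; auto. constructor; auto.
    intros y [Hy|Hy]; subst; auto.
Qed.

Lemma P2_elem (dl : list M) : P2 cl -> independent cl (set_of_list dl) ->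
  exists c, cl (set_of_list dl) c /\ forall D, proper_subset D (set_of_list dl) -> ~ cl D c.
Proof.
  intros HP2 Hi. apply NNPP. intro Hn. apply (HP2 (set_of_list dl)); auto.
  exists dl; auto. intro m. split.
  - intro Hm. apply NNPP. intro Hn2. apply Hn. exists m. split; auto.
    intros D HD HcD. apply Hn2. eauto.
  - intros [D [[HD _] HcD]]. revert HcD. apply mono; auto.
Qed.

End Sem.

Section Mod.
Variable M : Type.
Variable cl : (M -> Prop) -> (M -> Prop).
Hypothesis ext : forall A, subset A (cl A).
Hypothesis mono : forall A B, subset A B -> subset (cl A) (cl B).
Hypothesis idem : forall A a, cl (cl A) a <-> cl A a.
Hypothesis exch : forall A a b, cl (union A (singleton b)) a -> ~ cl A a ->
     cl (union A (singleton a)) b.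
Variable C : IStruct -> Prop.
Hypothesis HC : C (@pregeom_struct M cl).
Variable Sigma : atom -> Prop.
Variable k0 : M.
Hypothesis Hk0 : cl empty_set k0.

Lemma img_k0 (s : nat -> M) (Z l : list nat) : (forall v, ~ In v Z -> s v = k0) ->
  ~ (exists v, In v Z /\ In v l) -> subset (assign_img s l) (cl empty_set).
Proof. intros Hs Hn y [v [Hv E]]. subst. rewrite Hs; auto. intro; apply Hn; eauto. Qed.

Lemma single_model (e : M) (Z x y : list nat) : ~ cl empty_set e ->
  (forall psi, Sigma psi -> ~ ((exists v, In v Z /\ In v (fst psi)) /\ (exists v, In v Z /\ In v (snd psi)))) ->
  (exists v, In v Z /\ In v x) -> (exists v, In v Z /\ In v y) -> ~ models C Sigma (x, y).
Proof.
  intros He HS [v1 [Z1 X1]] [v2 [Z2 Y2]] Hm.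
  set (s := fun v => if in_dec Nat.eq_dec v Z then e else k0).
  assert (Hs : forall v, ~ In v Z -> s v = k0).
  { intros v Hv; unfold s; destruct (in_dec Nat.eq_dec v Z); tauto. }
  specialize (Hm _ HC s).
  assert (Hsat : forall psi, Sigma psi -> satisfies (@pregeom_struct M cl) s psi).
  { intros [u w] Hp. specialize (HS _ Hp). simpl in HS. unfold satisfies; simpl.
    apply (sat_gen M cl ext mono idem).
    destruct (classic (exists v, In v Z /\ In v w)) as [Hw|Hw].
    - right; left. apply (img_k0 s Z); auto; intro; apply HS; auto.
    - left. apply (img_k0 s Z); auto. }
  specialize (Hm Hsat). unfold satisfies in Hm; simpl in Hm.
  revert Hm. apply (refute_shared M cl ext mono) with e; auto.
  - exists v1. split; auto. unfold s. destruct (in_dec Nat.eq_dec v1 Z); tauto.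
  - exists v2. split; auto. unfold s. destruct (in_dec Nat.eq_dec v2 Z); tauto.
Qed.

Lemma circ_model (dl : list M) c (X Y x y : list nat) :
  NoDup dl -> length dl = length X + length Y - 1 -> 2 <= length dl ->
  independent cl (set_of_list dl) -> cl (set_of_list dl) c ->
  (forall D, proper_subset D (set_of_list dl) -> ~ cl D c) ->
  NoDup X -> NoDup Y -> (forall v, In v X -> In v Y -> False) -> X <> [] -> Y <> [] ->
  incl X x -> incl Y y ->
  (forall u w, Sigma (u, w) ->
     (forall v, (In v X \/ In v Y) -> In v u -> In v w -> False) /\
     ((forall v, (In v X \/ In v Y) -> In v u \/ In v w) ->
      (exists v, (In v X \/ In v Y) /\ In v u) ->
      (exists v, (In v X \/ In v Y) /\ In v w) -> False)) ->
  ~ models C Sigma (x, y).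
Proof.
  intros Hn Hl Hl2 Hi Hc Hp HX HY Hdis HX0 HY0 Hx Hy HS Hm.
  assert (Hcn : ~ In c dl).
  { intro Hcd. destruct dl as [|a1 [|a2 dl']]; simpl in Hl2; try lia.
    destruct (classic (c = a1)) as [E|E].
    - apply (Hp (remove_pt (set_of_list (a1 :: a2 :: dl')) a2)).
      + split. intros z [Hz _]; auto. exists a2. split. right; left; auto. intros [_ H]; auto.
      + apply ext. split. left; auto. subst. apply NoDup_cons_iff in Hn as [Hn1 _]. intro; subst; apply Hn1; left; auto.
    - apply (Hp (remove_pt (set_of_list (a1 :: a2 :: dl')) a1)).
      + split. intros z [Hz _]; auto. exists a1. split. left; auto. intros [_ H]; auto.
      + apply ext. split; auto. }
  set (ks := X ++ Y).
  set (m := length X).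
  set (d1 := firstn m dl). set (d2 := skipn m dl).
  set (es := d1 ++ (d2 ++ [c])).
  assert (Hd1 : length d1 = length X).
  { unfold d1. apply firstn_length_le. destruct Y; [congruence|]. simpl in Hl; lia. }
  assert (Hd2 : length (d2 ++ [c]) = length Y).
  { rewrite length_app. unfold d2. rewrite length_skipn. simpl. destruct Y; [congruence|]. fold m in Hl; simpl in Hl. simpl; lia. }
  assert (Edl : dl = d1 ++ d2) by (symmetry; apply firstn_skipn).
  clearbody d1 d2.
  assert (Ees : es = dl ++ [c]) by (rewrite Edl; unfold es; rewrite app_assoc; reflexivity).
  assert (Hlen : length ks = length es) by (unfold ks, es; rewrite length_app, (length_app d1), Hd1, Hd2; reflexivity).
  assert (Hnes : NoDup es).
  { rewrite Ees. apply NoDup_app; auto. constructor; auto; constructor.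
    intros a Ha [Hb|[]]; subst; auto. }
  set (s := lk M ks es k0).
  assert (Hs0 : forall v, ~ In v ks -> s v = k0) by (intros; apply lk_notin; auto).
  assert (Hes0 : forall d, In d es -> ~ cl empty_set d).
  { intros d Hd. rewrite Ees in Hd. apply in_app_or in Hd. destruct Hd as [Hd|[Hd|[]]].
    - apply (indep_not0 M cl mono (set_of_list dl)); auto.
    - subst d. apply Hp. split. intros _ []. destruct dl; simpl in Hl2; [lia|].
      exists m0. split. left; auto. intros []. }
  assert (HZ : forall v, In v X \/ In v Y <-> In v ks) by (intro v; unfold ks; rewrite in_app_iff; tauto).
  assert (Hinj : forall v1 v2, In v1 ks -> In v2 ks -> s v1 = s v2 -> v1 = v2).
  { intros v1 v2 H1 H2 E. eapply lk_inj; eauto. }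
  specialize (Hm _ HC s).
  assert (Hsat : forall psi, Sigma psi -> satisfies (@pregeom_struct M cl) s psi).
  { intros [u w] Hpsi. destruct (HS u w Hpsi) as [Ha Hb]. unfold satisfies; simpl.
    apply (sat_gen M cl ext mono idem).
    destruct (classic (exists v, (In v X \/ In v Y) /\ In v w)) as [Hw|Hw].
    2:{ left. apply (img_k0 s ks); auto. intros [v [H1 H2]]; apply Hw; exists v; rewrite HZ; auto. }
    destruct (classic (exists v, (In v X \/ In v Y) /\ In v u)) as [Hu|Hu].
    2:{ right; left. apply (img_k0 s ks); auto. intros [v [H1 H2]]; apply Hu; exists v; rewrite HZ; auto. }
    right; right.
    assert (exists z0, In z0 ks /\ ~ In z0 u /\ ~ In z0 w) as [z0 [Z0 [U0 W0]]].
    { apply NNPP. intro Hn0. apply Hb; auto. intros v Hv. apply NNPP. intro Hn1. apply Hn0.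
      exists v. rewrite <- HZ. tauto. }
    exists (fun d => In d es /\ d <> s z0). split; [|split; [|split]].
    - rewrite Ees. apply (circ_indep M cl mono exch); auto. rewrite <- Ees. apply lk_in; auto.
    - intros d [v [Hv E]]. subst d. destruct (in_dec Nat.eq_dec v ks) as [i|i].
      + left. split. apply lk_in; auto. intro E. apply Hinj in E; auto. subst; auto.
      + right. rewrite Hs0; auto.
    - intros d [v [Hv E]]. subst d. destruct (in_dec Nat.eq_dec v ks) as [i|i].
      + left. split. apply lk_in; auto. intro E. apply Hinj in E; auto. subst; auto.
      + right. rewrite Hs0; auto.
    - intros d [Hd _] [v1 [V1 E1]] [v2 [V2 E2]]. subst d.
      assert (i1 : In v1 ks). { apply NNPP; intro N. rewrite Hs0 in Hd; auto. apply (Hes0 k0); auto. }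
      assert (i2 : In v2 ks). { apply NNPP; intro N. rewrite Hs0 in E2; auto. rewrite <- E2 in Hd. apply (Hes0 k0); auto. }
      apply Hinj in E2; auto. subst. apply (Ha v1); auto. apply HZ; auto. }
  specialize (Hm Hsat). unfold satisfies in Hm; simpl in Hm. revert Hm.
  apply (refute_circ M cl ext mono exch dl d1 d2 c); auto.
  - intro E. rewrite E in Hd1. destruct X; [congruence|]. simpl in Hd1; discriminate.
  - intros d Hd. destruct (lk_surj M X d1 k0 d) as [v [Hv E]]; auto.
    exists v. split; auto. unfold s, ks, es. rewrite lk_app1; auto.
  - intros d Hd. destruct (lk_surj M Y (d2 ++ [c]) k0 d) as [v [Hv E]]; auto. apply in_or_app; auto.
    exists v. split; auto. unfold s, ks, es. rewrite lk_app2; auto. intro; eapply Hdis; eauto.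
  - destruct (lk_surj M Y (d2 ++ [c]) k0 c) as [v [Hv E]]; auto. apply in_or_app; right; left; auto.
    exists v. split; auto. unfold s, ks, es. rewrite lk_app2; auto. intro; eapply Hdis; eauto.
Qed.
End Mod.

Theorem theorem3 :
  forall (C : IStruct -> Prop) (M : Type) (cl : (M -> Prop) -> (M -> Prop)),
    (forall S, C S -> is_indep_structure S) ->
    is_pregeometry cl -> P1 cl -> P2 cl -> P3 cl ->
    C (@pregeom_struct M cl) ->
    forall (Sigma : atom -> Prop) (phi : atom),
      derivable Sigma phi <-> models C Sigma phi.
Proof.
  intros C M cl HCs Hpg HP1 HP2 HP3 HC Sigma [x y]. split.
  - intros Hd S HS s Hsig. exact (soundness S s Sigma (HCs S HS) Hsig (x, y) Hd).
  - intro Hm. apply NNPP; intro Hnd.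
    destruct Hpg as [ext [mono [idem [exch _]]]]. destruct HP1 as [k0 Hk0].
    destruct HP3 as [B [HBi [_ HBf]]].
    assert (Hnd' : ~ derivable Sigma (nodup Nat.eq_dec x, nodup Nat.eq_dec y)).
    { intro H. apply Hnd. eapply proj; eauto; intros z Hz; apply nodup_In; auto. }
    destruct (min_exists Sigma _ _ _ (NoDup_nodup _ x) (NoDup_nodup _ y) (le_n _) Hnd')
      as [X [Y [HXx [HYy Hmin]]]].
    assert (HXx' : incl X x) by (intros z Hz; apply (nodup_In Nat.eq_dec); auto).
    assert (HYy' : incl Y y) by (intros z Hz; apply (nodup_In Nat.eq_dec); auto).
    clear HXx HYy.
    pose proof (min_nonconst Sigma X Y Hmin) as Hnc.
    pose proof Hmin as [HX [HY [HD Hm']]].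
    destruct (P3_lists M cl B HBi HBf 1) as [[|e [|]] [_ [Hl1 HeB]]]; simpl in Hl1; try lia.
    assert (He : ~ cl empty_set e).
    { apply (indep_not0 M cl mono B); auto. apply HeB; left; auto. }
    destruct (classic (exists v, In v X /\ In v Y)) as [[v [vX vY]]|Hdis].
    + revert Hm. apply (single_model M cl ext mono idem C HC Sigma k0 Hk0 e [v]); auto.
      * intros [u w] Hp [[v1 [[E1|[]] U1]] [v2 [[E2|[]] W2]]]. subst. simpl in *.
        apply (Hnc v2); auto. eapply proj; [apply d_hyp; exact Hp| |];
          intros z [Hz|[]]; subst; auto.
      * exists v; split; [left|]; auto.
      * exists v; split; [left|]; auto.
    + assert (HX0 : X <> []).
      { intro E; subst. apply HD. apply d_sym, d_empty. }
      assert (HY0 : Y <> []).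
      { intro E; subst. apply HD. apply d_empty. }
      destruct (classic (length X + length Y = 2)) as [L2|L2].
      * destruct X as [|a [|a' X]]; [congruence| |simpl in L2; destruct Y; [congruence|simpl in L2; lia]].
        destruct Y as [|b [|b' Y]]; [congruence| |simpl in L2; lia].
        revert Hm. apply (single_model M cl ext mono idem C HC Sigma k0 Hk0 e [a; b]); auto.
        -- intros [u w] Hp [[v1 [Z1 U1]] [v2 [Z2 W2]]]. simpl in *.
           assert (Hd : derivable Sigma ([v1], [v2])).
           { eapply proj; [apply d_hyp; exact Hp| |]; intros z [Hz|[]]; subst; auto. }
           destruct Z1 as [E1|[E1|[]]], Z2 as [E2|[E2|[]]]; subst v1 v2.
           ++ apply (Hnc a); auto; left; left; auto.
           ++ apply HD; auto.
           ++ apply HD; apply d_sym; auto.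
           ++ apply (Hnc b); auto; right; left; auto.
        -- exists a; split; [left|apply HXx'; left]; auto.
        -- exists b; split; [right; left|apply HYy'; left]; auto.
      * destruct (P3_lists M cl B HBi HBf (length X + length Y - 1)) as [dl [Hdn [Hdl HdB]]].
        assert (Hdi : independent cl (set_of_list dl)) by (apply (sub_indep M cl mono _ B); auto).
        destruct (P2_elem M cl mono dl HP2 Hdi) as [c [Hc Hpc]].
        revert Hm. apply (circ_model M cl ext mono idem exch C HC Sigma k0 Hk0 dl c X Y); auto.
        -- destruct X; [congruence|]. destruct Y; [congruence|]. simpl in *. lia.
        -- intros v vX vY. apply Hdis; eauto.
        -- intros u w Hp. split.
           ++ intros v Zv Uv Wv. apply (Hnc v Zv). eapply proj; [apply d_hyp; exact Hp| |];
                intros z [Hz|[]]; subst; auto.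
           ++ intros Hcov Hu Hw. eapply (min_cover Sigma X Y u w Hmin); eauto. apply d_hyp; auto.
              intros v Zv Uv Wv. apply (Hnc v Zv). eapply proj; [apply d_hyp; exact Hp| |];
                intros z [Hz|[]]; subst; auto.
Qed.
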